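(* Every marginally trapped meridian surface $\mathcal M'_m:z(u,v)=u\,l(v)+g(u)e_4$ (respectively $\mathcal M''_m:z(u,v)=u\,l(v)+g(u)e_1$), $u\in I\subset(0,\infty)$, has non-parallel mean curvature vector field, i.e. $DH$ does not vanish identically, where $D$ is the normal connection.
   Context: $\mathbb{R}^4_1$ is $\mathbb{R}^4$ with metric $\langle\cdot,\cdot\rangle$ of signature $(3,1)$ and orthonormal basis $e_1,\dots,e_4$, $\langle e_i,e_i\rangle=1$ ($i\le3$), $\langle e_4,e_4\rangle=-1$. For a spacelike surface, the normal connection $D$ is the normal component of the flat derivative of normal fields, and the mean curvature vector $H$ is half the trace of the second fundamental form; the surface is marginally trapped if $H\neq0$ and $\langle H,H\rangle=0$ everywhere. $\mathcal M'_m$: $l(v)$, $v\in J$, is an arc-length parametrized curve on the unit sphere $S^2(1)\subset\mathrm{span}\{e_1,e_2,e_3\}$, $g$ smooth with $|\dot g|<1$. $\mathcal M''_m$: $l(v)$, $v\in J$, is an arc-length parametrized spacelike curve on the de Sitter sphere $S^2_1(1)=\{V\in\mathrm{span}\{e_2,e_3,e_4\}:\langle V,V\rangle=1\}$, $g$ smooth. These are meridian surfaces on the rotational hypersurfaces obtained by rotating the curve $u\mapsto(u,g(u))$ about the timelike axis $Oe_4$, respectively the spacelike axis $Oe_1$. *)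

(* Defs.v *)
From Stdlib Require Import Reals ClassicalEpsilon.
Open Scope R_scope.

Record V4 := mkV { vc1 : R; vc2 : R; vc3 : R; vc4 : R }.

Definition vadd (x y : V4) : V4 :=
  mkV (vc1 x + vc1 y) (vc2 x + vc2 y) (vc3 x + vc3 y) (vc4 x + vc4 y).
Definition vscal (a : R) (x : V4) : V4 :=
  mkV (a * vc1 x) (a * vc2 x) (a * vc3 x) (a * vc4 x).
Definition vsub (x y : V4) : V4 := vadd x (vscal (-1) y).
Definition vzero : V4 := mkV 0 0 0 0.
Definition e1 : V4 := mkV 1 0 0 0.
Definition e4 : V4 := mkV 0 0 0 1.

Definition ip (x y : V4) : R :=
  vc1 x * vc1 y + vc2 x * vc2 y + vc3 x * vc3 y - vc4 x * vc4 y.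

(** The derivative of f at x (chosen by Hilbert's epsilon; it is the genuine
    derivative whenever f is differentiable at x). *)
Definition deriv (f : R -> R) (x : R) : R :=
  epsilon (inhabits 0) (fun l => derivable_pt_lim f x l).

Definition dvec (f : R -> V4) (x : R) : V4 :=
  mkV (deriv (fun t => vc1 (f t)) x) (deriv (fun t => vc2 (f t)) x)
      (deriv (fun t => vc3 (f t)) x) (deriv (fun t => vc4 (f t)) x).

Definition is_open_interval (I : R -> Prop) : Prop :=
  (exists x, I x) /\
  (forall x y z, I x -> I z -> x <= y <= z -> I y) /\
  (forall x, I x -> exists eps, 0 < eps /\ forall y, Rabs (y - x) < eps -> I y).

Definition smooth_on (P : R -> Prop) (f : R -> R) : Prop :=
  exists d : nat -> R -> R, (forall x, d O x = f x) /\
    forall n x, P x -> derivable_pt_lim (d n) x (d (S n) x).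

Definition smooth_curve_on (P : R -> Prop) (l : R -> V4) : Prop :=
  smooth_on P (fun t => vc1 (l t)) /\ smooth_on P (fun t => vc2 (l t)) /\
  smooth_on P (fun t => vc3 (l t)) /\ smooth_on P (fun t => vc4 (l t)).

Section Surface.
Variable z : R -> R -> V4.

Definition zu (u v : R) : V4 := dvec (fun t => z t v) u.
Definition zv (u v : R) : V4 := dvec (fun s => z u s) v.
Definition zuu (u v : R) : V4 := dvec (fun t => zu t v) u.
Definition zuv (u v : R) : V4 := dvec (fun s => zu u s) v.
Definition zvv (u v : R) : V4 := dvec (fun s => zv u s) v.

Definition cE (u v : R) : R := ip (zu u v) (zu u v).
Definition cF (u v : R) : R := ip (zu u v) (zv u v).
Definition cG (u v : R) : R := ip (zv u v) (zv u v).
Definition cW (u v : R) : R := cE u v * cG u v - cF u v * cF u v.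

(** Orthogonal projection onto the tangent plane span{z_u, z_v}. *)
Definition tang (u v : R) (X : V4) : V4 :=
  vadd (vscal ((cG u v * ip X (zu u v) - cF u v * ip X (zv u v)) / cW u v) (zu u v))
       (vscal ((cE u v * ip X (zv u v) - cF u v * ip X (zu u v)) / cW u v) (zv u v)).

Definition nrm (u v : R) (X : V4) : V4 := vsub X (tang u v X).

Definition h11 (u v : R) : V4 := nrm u v (zuu u v).
Definition h12 (u v : R) : V4 := nrm u v (zuv u v).
Definition h22 (u v : R) : V4 := nrm u v (zvv u v).

(** Mean curvature vector: half the trace of sigma w.r.t. the induced metric. *)
Definition Hvec (u v : R) : V4 :=
  vscal (1 / (2 * cW u v))
    (vadd (vsub (vscal (cG u v) (h11 u v)) (vscal (2 * cF u v) (h12 u v)))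
          (vscal (cE u v) (h22 u v))).

Definition spacelike (dom : R -> R -> Prop) : Prop :=
  forall u v, dom u v -> 0 < cE u v /\ 0 < cG u v /\ 0 < cW u v.

Definition marginally_trapped (dom : R -> R -> Prop) : Prop :=
  spacelike dom /\
  forall u v, dom u v -> Hvec u v <> vzero /\ ip (Hvec u v) (Hvec u v) = 0.

(** Normal connection applied to H along the coordinate fields. *)
Definition DuH (u v : R) : V4 := nrm u v (dvec (fun t => Hvec t v) u).
Definition DvH (u v : R) : V4 := nrm u v (dvec (fun s => Hvec u s) v).

Definition parallel_H (dom : R -> R -> Prop) : Prop :=
  forall u v, dom u v -> DuH u v = vzero /\ DvH u v = vzero.
End Surface.

Definition meridian1 (l : R -> V4) (g : R -> R) : R -> R -> V4 :=
  fun u v => vadd (vscal u (l v)) (vscal (g u) e4).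
Definition meridian2 (l : R -> V4) (g : R -> R) : R -> R -> V4 :=
  fun u v => vadd (vscal u (l v)) (vscal (g u) e1).

(* Main.v *)
Require Import Defs.
From Stdlib Require Import Reals Lra Psatz ClassicalEpsilon FunctionalExtensionality.
From Coquelicot Require Import Coquelicot.
Open Scope R_scope.

Lemma deriv_unique f x l : derivable_pt_lim f x l -> deriv f x = l.
Proof.
  intro H. unfold deriv.
  pose proof (epsilon_spec (inhabits 0) (fun l => derivable_pt_lim f x l) (ex_intro _ l H)) as HH.
  eapply uniqueness_limite; eauto.
Qed.

Lemma lim_local f h x l eps : 0 < eps -> (forall y, Rabs (y - x) < eps -> f y = h y) ->
  derivable_pt_lim h x l -> derivable_pt_lim f x l.
Proof.
  intros He Hfh Hd e He0.
  destruct (Hd e He0) as [d Hd'].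
  assert (Hm : 0 < Rmin d eps) by (apply Rmin_pos; [apply cond_pos|lra]).
  exists (mkposreal _ Hm). intros hh Hh0 Hhd. simpl in Hhd.
  rewrite (Hfh x) by (rewrite Rminus_diag, Rabs_R0; lra).
  rewrite (Hfh (x+hh)).
  - apply Hd'; auto. apply Rlt_le_trans with (1 := Hhd). apply Rmin_l.
  - replace (x + hh - x) with hh by ring. apply Rlt_le_trans with (1 := Hhd). apply Rmin_r.
Qed.

Definition openP (P : R -> Prop) := forall x, P x -> exists eps, 0 < eps /\ forall y, Rabs (y - x) < eps -> P y.

Lemma const_local P f k x l : openP P -> (forall y, P y -> f y = k) -> P x ->
  derivable_pt_lim f x l -> l = 0.
Proof.
  intros HP Hk Hx Hd. destruct (HP x Hx) as [eps [He Hb]].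
  assert (derivable_pt_lim f x 0).
  { apply (lim_local f (fun _ => k) x 0 eps He). intros; apply Hk, Hb; auto.
    apply derivable_pt_lim_const. }
  eapply uniqueness_limite; eauto.
Qed.

Definition vderiv (f : R -> V4) x (A : V4) : Prop :=
  derivable_pt_lim (fun t => vc1 (f t)) x (vc1 A) /\
  derivable_pt_lim (fun t => vc2 (f t)) x (vc2 A) /\
  derivable_pt_lim (fun t => vc3 (f t)) x (vc3 A) /\
  derivable_pt_lim (fun t => vc4 (f t)) x (vc4 A).

Lemma dvec_local h f x A eps : 0 < eps -> (forall y, Rabs (y - x) < eps -> h y = f y) ->
  vderiv f x A -> dvec h x = A.
Proof.
  intros He Hh [H1 [H2 [H3 H4]]]. destruct A. unfold dvec. simpl in *.
  f_equal; apply deriv_unique; eapply lim_local; eauto; intros; simpl; rewrite Hh; auto.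
Qed.

Lemma dvec_eq f x A : vderiv f x A -> dvec f x = A.
Proof. intro H. apply (dvec_local f f x A 1); auto; lra. Qed.

Lemma vderiv_ext f x A B : vderiv f x A -> A = B -> vderiv f x B.
Proof. intros H ->; auto. Qed.

Lemma vderiv_add f g x A B : vderiv f x A -> vderiv g x B ->
  vderiv (fun t => vadd (f t) (g t)) x (vadd A B).
Proof.
  intros [A1 [A2 [A3 A4]]] [B1 [B2 [B3 B4]]]; repeat split; simpl;
  apply derivable_pt_lim_plus; auto.
Qed.

Lemma vderiv_scal (a : R -> R) f x a' A : derivable_pt_lim a x a' -> vderiv f x A ->
  vderiv (fun t => vscal (a t) (f t)) x (vadd (vscal a' (f x)) (vscal (a x) A)).
Proof.
  intros Ha [A1 [A2 [A3 A4]]]; repeat split; simpl;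
  apply (derivable_pt_lim_mult a (fun t => _ (f t))); auto.
Qed.

Lemma vderiv_const (C : V4) x : vderiv (fun _ => C) x vzero.
Proof. repeat split; simpl; apply derivable_pt_lim_const. Qed.

Lemma vderiv_ip A B x A' B' : vderiv A x A' -> vderiv B x B' ->
  derivable_pt_lim (fun t => ip (A t) (B t)) x (ip A' (B x) + ip (A x) B').
Proof.
  intros [A1 [A2 [A3 A4]]] [B1 [B2 [B3 B4]]]. unfold ip.
  replace (vc1 A' * vc1 (B x) + vc2 A' * vc2 (B x) + vc3 A' * vc3 (B x) - vc4 A' * vc4 (B x) +
   (vc1 (A x) * vc1 B' + vc2 (A x) * vc2 B' + vc3 (A x) * vc3 B' - vc4 (A x) * vc4 B'))
  with ((vc1 A' * vc1 (B x) + vc1 (A x) * vc1 B') + (vc2 A' * vc2 (B x) + vc2 (A x) * vc2 B')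
   + (vc3 A' * vc3 (B x) + vc3 (A x) * vc3 B') - (vc4 A' * vc4 (B x) + vc4 (A x) * vc4 B')) by ring.
  apply (derivable_pt_lim_minus (fun t => _ + _ + _)).
  apply (derivable_pt_lim_plus (fun t => _ + _)).
  apply (derivable_pt_lim_plus (fun t => _)).
  all: apply (derivable_pt_lim_mult (fun t => _ (A t)) (fun t => _ (B t))); auto.
Qed.

Lemma V4_ext x y : vc1 x = vc1 y -> vc2 x = vc2 y -> vc3 x = vc3 y -> vc4 x = vc4 y -> x = y.
Proof. destruct x, y; simpl; intros; subst; auto. Qed.

Ltac vext := apply V4_ext; simpl.

Lemma ip_addl x y w : ip (vadd x y) w = ip x w + ip y w. Proof. unfold ip; simpl; ring. Qed.
Lemma ip_addr x y w : ip w (vadd x y) = ip w x + ip w y. Proof. unfold ip; simpl; ring. Qed.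
Lemma ip_scall a x w : ip (vscal a x) w = a * ip x w. Proof. unfold ip; simpl; ring. Qed.
Lemma ip_scalr a x w : ip w (vscal a x) = a * ip w x. Proof. unfold ip; simpl; ring. Qed.
Lemma ip_sym x y : ip x y = ip y x. Proof. unfold ip; ring. Qed.
Lemma ip_zerol x : ip vzero x = 0. Proof. unfold ip; simpl; ring. Qed.

Section Gen.
Variables (I J : R -> Prop) (d a b c e : nat -> R -> R) (E0 : V4) (s : R).
Hypothesis HI : openP I.
Hypothesis HJ : openP J.
Hypothesis Hd : forall n x, I x -> derivable_pt_lim (d n) x (d (S n) x).
Hypothesis Ha : forall n x, J x -> derivable_pt_lim (a n) x (a (S n) x).
Hypothesis Hb : forall n x, J x -> derivable_pt_lim (b n) x (b (S n) x).
Hypothesis Hc : forall n x, J x -> derivable_pt_lim (c n) x (c (S n) x).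
Hypothesis He : forall n x, J x -> derivable_pt_lim (e n) x (e (S n) x).

Definition Vf n v := mkV (a n v) (b n v) (c n v) (e n v).
Lemma vderiv_Vf n v : J v -> vderiv (Vf n) v (Vf (S n) v).
Proof. intro Hv; repeat split; simpl; auto. Qed.

Definition zz t v := vadd (vscal t (Vf 0 v)) (vscal (d 0 t) E0).

Lemma zu_val t v : I t -> zu zz t v = vadd (Vf 0 v) (vscal (d 1 t) E0).
Proof.
  intro Ht. apply dvec_eq. eapply vderiv_ext.
  - apply vderiv_add. apply (vderiv_scal (fun t => t)). apply derivable_pt_lim_id. apply vderiv_const.
    apply vderiv_scal. apply Hd; auto. apply vderiv_const.
  - vext; ring.
Qed.

Lemma zv_val t v : J v -> zv zz t v = vscal t (Vf 1 v).
Proof.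
  intro Hv. apply dvec_eq. eapply vderiv_ext.
  - apply vderiv_add. apply (vderiv_scal (fun _ => t)). apply derivable_pt_lim_const.
    apply vderiv_Vf; auto.
    apply (vderiv_scal (fun _ => d 0 t)). apply derivable_pt_lim_const. apply vderiv_const.
  - vext; ring.
Qed.

Lemma zuu_val t v : I t -> zuu zz t v = vscal (d 2 t) E0.
Proof.
  intro Ht. destruct (HI t Ht) as [eps [Heps Hb']].
  apply (dvec_local _ (fun t => vadd (Vf 0 v) (vscal (d 1 t) E0)) t _ eps Heps).
  - intros; apply zu_val; auto.
  - eapply vderiv_ext.
    + apply vderiv_add. apply vderiv_const. apply vderiv_scal. apply Hd; auto. apply vderiv_const.
    + vext; ring.
Qed.

Lemma zuv_val t v : I t -> J v -> zuv zz t v = Vf 1 v.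
Proof.
  intros Ht Hv. destruct (HJ v Hv) as [eps [Heps Hb']].
  apply (dvec_local _ (fun v => vadd (Vf 0 v) (vscal (d 1 t) E0)) v _ eps Heps).
  - intros; apply zu_val; auto.
  - eapply vderiv_ext.
    + apply vderiv_add. apply vderiv_Vf; auto. apply (vderiv_scal (fun _ => d 1 t)).
      apply derivable_pt_lim_const. apply vderiv_const.
    + vext; ring.
Qed.

Lemma zvv_val t v : J v -> zvv zz t v = vscal t (Vf 2 v).
Proof.
  intros Hv. destruct (HJ v Hv) as [eps [Heps Hb']].
  apply (dvec_local _ (fun v => vscal t (Vf 1 v)) v _ eps Heps).
  - intros; apply zv_val; auto.
  - eapply vderiv_ext.
    + apply (vderiv_scal (fun _ => t)). apply derivable_pt_lim_const. apply vderiv_Vf; auto.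
    + vext; ring.
Qed.


Hypothesis G : forall v, J v -> ip (Vf 0 v) (Vf 0 v) = 1 /\ ip (Vf 0 v) (Vf 1 v) = 0 /\
  ip (Vf 1 v) (Vf 1 v) = 1 /\ ip (Vf 0 v) (Vf 2 v) = -1 /\ ip (Vf 1 v) (Vf 2 v) = 0 /\
  ip (Vf 0 v) E0 = 0 /\ ip (Vf 1 v) E0 = 0 /\ ip (Vf 2 v) E0 = 0.
Hypothesis HEE : ip E0 E0 = s.
Hypothesis Hs : s * s = 1.
Hypothesis Hpos : forall t, I t -> 0 < t.
Hypothesis HEf : forall t, I t -> 0 < 1 + s * d 1 t ^ 2.

Ltac getgram v Hv :=
  let g1 := fresh "g" in let g2 := fresh "g" in let g3 := fresh "g" in let g4 := fresh "g" in
  let g5 := fresh "g" in let g6 := fresh "g" in let g7 := fresh "g" in let g8 := fresh "g" in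
  destruct (G v Hv) as (g1 & g2 & g3 & g4 & g5 & g6 & g7 & g8);
  assert (ip (Vf 1 v) (Vf 0 v) = 0) by (rewrite ip_sym; auto);
  assert (ip (Vf 2 v) (Vf 0 v) = -1) by (rewrite ip_sym; auto);
  assert (ip (Vf 2 v) (Vf 1 v) = 0) by (rewrite ip_sym; auto);
  assert (ip E0 (Vf 0 v) = 0) by (rewrite ip_sym; auto);
  assert (ip E0 (Vf 1 v) = 0) by (rewrite ip_sym; auto);
  assert (ip E0 (Vf 2 v) = 0) by (rewrite ip_sym; auto).

Ltac gram := repeat rewrite ?ip_addl, ?ip_addr, ?ip_scall, ?ip_scalr;
  repeat match goal with H : ip _ _ = _ |- _ => rewrite H end.

Lemma cE_val t v : I t -> J v -> cE zz t v = 1 + s * d 1 t ^ 2.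
Proof. intros Ht Hv; getgram v Hv. unfold cE; rewrite zu_val by auto. gram. ring. Qed.
Lemma cF_val t v : I t -> J v -> cF zz t v = 0.
Proof. intros Ht Hv; getgram v Hv. unfold cF; rewrite zu_val, zv_val by auto. gram. ring. Qed.
Lemma cG_val t v : I t -> J v -> cG zz t v = t ^ 2.
Proof. intros Ht Hv; getgram v Hv. unfold cG; rewrite zv_val by auto. gram. ring. Qed.
Lemma cW_val t v : I t -> J v -> cW zz t v = t ^ 2 * (1 + s * d 1 t ^ 2).
Proof. intros Ht Hv. unfold cW; rewrite cE_val, cF_val, cG_val by auto. ring. Qed.

Definition Ef t := 1 + s * d 1 t ^ 2.
Definition cL t := (t - t ^ 2 * d 2 t * s * d 1 t / Ef t) / (2 * t ^ 2 * Ef t).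
Definition cN t := 1 / (2 * t).
Definition cEE t := (t ^ 2 * d 2 t / Ef t + t * d 1 t) / (2 * t ^ 2 * Ef t).
Definition HF t v := vadd (vscal (cL t) (Vf 0 v)) (vadd (vscal (cN t) (Vf 2 v)) (vscal (cEE t) E0)).

Lemma H_val t v : I t -> J v -> Hvec zz t v = HF t v.
Proof.
  intros Ht Hv. getgram v Hv.
  assert (0 < t) by auto. assert (0 < Ef t) by (apply HEf; auto).
  unfold Hvec, h11, h12, h22, nrm, tang.
  rewrite cW_val, cE_val, cF_val, cG_val by auto.
  rewrite zuu_val, zuv_val, zvv_val, zu_val, zv_val by auto.
  gram. unfold HF, cL, cN, cEE, Ef in *. vext; field; lra.
Qed.


Lemma exd n x : I x -> ex_derive (d n) x.
Proof. intro Hx. exists (d (S n) x). apply is_derive_Reals. auto. Qed.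

Lemma cL_der u : I u -> exists l, derivable_pt_lim cL u l.
Proof.
  intro Hu. assert (0 < u) by auto. assert (0 < Ef u) by (apply HEf; auto).
  assert (ex_derive cL u).
  { unfold cL, Ef in *. auto_derive. repeat split; try apply exd; auto.
    all: try (intro; nra); try exact I; apply Rgt_not_eq, Rmult_lt_0_compat; nra. }
  destruct H1 as [l Hl]. exists l. apply is_derive_Reals; auto.
Qed.

Lemma cE_der u : I u -> exists l, derivable_pt_lim cEE u l.
Proof.
  intro Hu. assert (0 < u) by auto. assert (0 < Ef u) by (apply HEf; auto).
  assert (ex_derive cEE u).
  { unfold cEE, Ef in *. auto_derive. repeat split; try apply exd; auto.
    all: try (intro; nra); try exact I; apply Rgt_not_eq, Rmult_lt_0_compat; nra. }
  destruct H1 as [l Hl]. exists l. apply is_derive_Reals; auto.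
Qed.

Lemma cN_der u : I u -> derivable_pt_lim cN u (-1 / (2 * u ^ 2)).
Proof.
  intro Hu. assert (0 < u) by auto. apply is_derive_Reals. unfold cN. auto_derive.
  lra. field. lra.
Qed.

Lemma nrm_zero X al be A B : vsub X (vadd (vscal al A) (vscal be B)) = vzero ->
  exists al be, X = vadd (vscal al A) (vscal be B).
Proof.
  intro H. exists al, be. destruct X, A, B. unfold vsub, vadd, vscal, vzero in *; simpl in *.
  injection H; intros. f_equal; lra.
Qed.


Theorem gen_main : (exists u v, I u /\ J v) ->
  marginally_trapped zz (fun u v => I u /\ J v) -> ~ parallel_H zz (fun u v => I u /\ J v).
Proof.
  intros [u [v [Hu Hv]]] [Hsp HMT] Hpar.
  destruct (HMT u v (conj Hu Hv)) as [Hne Hnull].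
  destruct (Hpar u v (conj Hu Hv)) as [HDu _].
  destruct (cL_der u Hu) as [aL HaL]. destruct (cE_der u Hu) as [aE HaE].
  pose proof (cN_der u Hu) as HaN.
  assert (0 < u) by auto. assert (0 < Ef u) by (apply HEf; auto).
  set (bN := -1 / (2 * u ^ 2)) in *.
  assert (HX : dvec (fun t => Hvec zz t v) u =
    vadd (vscal aL (Vf 0 v)) (vadd (vscal bN (Vf 2 v)) (vscal aE E0))).
  { destruct (HI u Hu) as [eps [Heps Hball]].
    apply (dvec_local _ (fun t => HF t v) u _ eps Heps).
    - intros; apply H_val; auto.
    - eapply vderiv_ext.
      + unfold HF. apply vderiv_add. apply vderiv_scal; [exact HaL | apply vderiv_const].
        apply vderiv_add. apply vderiv_scal; [exact HaN | apply vderiv_const].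
        apply vderiv_scal; [exact HaE | apply vderiv_const].
      + vext; ring. }
  unfold DuH in HDu. rewrite HX in HDu. unfold nrm, tang in HDu.
  apply nrm_zero in HDu. destruct HDu as [al [be HDu]].
  rewrite zu_val, zv_val in HDu by auto.
  getgram v Hv.
  pose proof (f_equal (fun w => ip w E0) HDu) as q1.
  pose proof (f_equal (fun w => ip w (Vf 0 v)) HDu) as q2.
  pose proof (f_equal (fun w => ip w (Vf 1 v)) HDu) as q3.
  simpl in q1, q2, q3. revert q1 q2 q3. gram. intros q1 q2 q3.
  assert (hbe : be = 0) by nra.
  assert (haE : aE = al * d 1 u).
  { assert (hq : aE * s = al * d 1 u * s) by nra.
    transitivity (aE * s * s). rewrite Rmult_assoc, Hs; ring.
    rewrite hq, Rmult_assoc, Hs; ring. }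
  assert (haL : aL = al + bN) by nra.
  assert (hbN : bN <> 0).
  { unfold bN. intro Hz. assert (-1 = 0 * (2 * u ^ 2)).
    { rewrite <- Hz. field. lra. } lra. }
  assert (HNL : Vf 2 v = vscal (-1) (Vf 0 v)).
  { pose proof (f_equal vc1 HDu) as c1; pose proof (f_equal vc2 HDu) as c2;
    pose proof (f_equal vc3 HDu) as c3; pose proof (f_equal vc4 HDu) as c4.
    simpl in c1, c2, c3, c4. rewrite hbe, haE, haL in *.
    vext.
    all: apply (Rmult_eq_reg_l bN); [|exact hbN]; nra. }
  rewrite H_val in Hnull, Hne by auto. unfold HF in Hnull, Hne.
  rewrite HNL in Hnull, Hne. revert Hnull. gram. intro Hnull.
  assert (hd : cL u - cN u = - s * d 1 u * cEE u).
  { unfold cL, cN, cEE, Ef in *. field. lra. }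
  assert (hk : cEE u = 0).
  { assert (hq : cEE u * cEE u * (s * Ef u) = 0).
    { unfold Ef. replace (cL u) with (cN u - s * d 1 u * cEE u) in Hnull by lra.
      rewrite <- Hnull. ring. }
    apply Rmult_integral in hq. destruct hq as [hq|hq].
    - apply Rmult_integral in hq; tauto.
    - apply Rmult_integral in hq. destruct hq as [hq|hq]; [rewrite hq in Hs; lra | lra]. }
  apply Hne. rewrite hk. replace (cL u) with (cN u) by (rewrite hk in hd; lra).
  vext; ring.
Qed.

End Gen.

Lemma gen_inst (I J : R -> Prop) (l : R -> V4) (g : R -> R) (E0 : V4) (s : R) :
  is_open_interval I -> (forall u, I u -> 0 < u) -> is_open_interval J ->
  smooth_curve_on J l -> smooth_on I g ->
  (forall v, J v -> ip (l v) E0 = 0 /\ ip (l v) (l v) = 1 /\ ip (dvec l v) (dvec l v) = 1) ->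
  ip E0 E0 = s -> s * s = 1 ->
  marginally_trapped (fun u v => vadd (vscal u (l v)) (vscal (g u) E0)) (fun u v => I u /\ J v) ->
  ~ parallel_H (fun u v => vadd (vscal u (l v)) (vscal (g u) E0)) (fun u v => I u /\ J v).
Proof.
  intros [[u0 Hu0] [_ HI]] Hpos [[v0 Hv0] [_ HJ]] [[a [a0 Ha]] [[b [b0 Hb]] [[c [c0 Hc]] [e [e0 He]]]]]
    [d [d0 Hd]] Hl HEE Hs HMT.
  assert (Hlv : l = Vf a b c e 0).
  { apply functional_extensionality; intro v. apply V4_ext; simpl; auto. }
  assert (Hgv : g = d 0%nat).
  { apply functional_extensionality; intro v. auto. }
  subst l g.
  assert (HT : forall v, J v -> dvec (Vf a b c e 0) v = Vf a b c e 1 v).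
  { intros v Hv. apply dvec_eq. apply (vderiv_Vf J); auto. }
  assert (GLT : forall v, J v -> ip (Vf a b c e 0 v) (Vf a b c e 1 v) = 0).
  { intros v Hv. assert (HH := vderiv_ip _ _ v _ _ (vderiv_Vf J a b c e Ha Hb Hc He 0 v Hv)
       (vderiv_Vf J a b c e Ha Hb Hc He 0 v Hv)).
    pose proof (const_local J _ 1 v _ HJ (fun y Hy => proj1 (proj2 (Hl y Hy))) Hv HH).
    rewrite (ip_sym (Vf a b c e 1 v)) in H. lra. }
  assert (GTN : forall v, J v -> ip (Vf a b c e 1 v) (Vf a b c e 2 v) = 0).
  { intros v Hv. assert (HH := vderiv_ip _ _ v _ _ (vderiv_Vf J a b c e Ha Hb Hc He 1 v Hv)
       (vderiv_Vf J a b c e Ha Hb Hc He 1 v Hv)).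
    assert (HTT : forall y, J y -> ip (Vf a b c e 1 y) (Vf a b c e 1 y) = 1).
    { intros y Hy. rewrite <- HT by auto. apply Hl; auto. }
    pose proof (const_local J _ 1 v _ HJ HTT Hv HH).
    rewrite (ip_sym (Vf a b c e 2 v)) in H. lra. }
  assert (GLN : forall v, J v -> ip (Vf a b c e 0 v) (Vf a b c e 2 v) = -1).
  { intros v Hv. assert (HH := vderiv_ip _ _ v _ _ (vderiv_Vf J a b c e Ha Hb Hc He 0 v Hv)
       (vderiv_Vf J a b c e Ha Hb Hc He 1 v Hv)).
    pose proof (const_local J _ 0 v _ HJ GLT Hv HH).
    assert (ip (Vf a b c e 1 v) (Vf a b c e 1 v) = 1) by (rewrite <- HT by auto; apply Hl; auto).
    lra. }
  assert (GTE : forall v, J v -> ip (Vf a b c e 1 v) E0 = 0).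
  { intros v Hv. assert (HH := vderiv_ip _ _ v _ _ (vderiv_Vf J a b c e Ha Hb Hc He 0 v Hv)
       (vderiv_const E0 v)).
    pose proof (const_local J _ 0 v _ HJ (fun y Hy => proj1 (Hl y Hy)) Hv HH).
    rewrite (ip_sym _ vzero), ip_zerol in H. lra. }
  assert (GNE : forall v, J v -> ip (Vf a b c e 2 v) E0 = 0).
  { intros v Hv. assert (HH := vderiv_ip _ _ v _ _ (vderiv_Vf J a b c e Ha Hb Hc He 1 v Hv)
       (vderiv_const E0 v)).
    pose proof (const_local J _ 0 v _ HJ GTE Hv HH).
    rewrite (ip_sym _ vzero), ip_zerol in H. lra. }
  assert (HG : forall v, J v -> ip (Vf a b c e 0 v) (Vf a b c e 0 v) = 1 /\ ip (Vf a b c e 0 v) (Vf a b c e 1 v) = 0 /\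
    ip (Vf a b c e 1 v) (Vf a b c e 1 v) = 1 /\ ip (Vf a b c e 0 v) (Vf a b c e 2 v) = -1 /\
    ip (Vf a b c e 1 v) (Vf a b c e 2 v) = 0 /\
    ip (Vf a b c e 0 v) E0 = 0 /\ ip (Vf a b c e 1 v) E0 = 0 /\ ip (Vf a b c e 2 v) E0 = 0).
  { intros v Hv. repeat split; auto; try apply Hl; auto.
    rewrite <- HT by auto; apply Hl; auto. }
  assert (HEf : forall t, I t -> 0 < 1 + s * d 1%nat t ^ 2).
  { intros t Ht. destruct HMT as [Hsp _]. destruct (Hsp t v0 (conj Ht Hv0)) as [HcE _].
    rewrite <- (cE_val I J d a b c e E0 s Hd HG HEE t v0 Ht Hv0); exact HcE. }
  exact (gen_main I J d a b c e E0 s HI HJ Hd Ha Hb Hc He HG HEE Hs Hpos HEf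
    (ex_intro _ u0 (ex_intro _ v0 (conj Hu0 Hv0))) HMT).
Qed.

Theorem mainTheorem12 :
  (forall (I J : R -> Prop) (l : R -> V4) (g : R -> R),
      is_open_interval I -> (forall u, I u -> 0 < u) -> is_open_interval J ->
      smooth_curve_on J l -> smooth_on I g ->
      (forall v, J v -> vc4 (l v) = 0 /\ ip (l v) (l v) = 1 /\
                        ip (dvec l v) (dvec l v) = 1) ->
      (forall u, I u -> Rabs (deriv g u) < 1) ->
      marginally_trapped (meridian1 l g) (fun u v => I u /\ J v) ->
      ~ parallel_H (meridian1 l g) (fun u v => I u /\ J v))
  /\
  (forall (I J : R -> Prop) (l : R -> V4) (g : R -> R),
      is_open_interval I -> (forall u, I u -> 0 < u) -> is_open_interval J ->
      smooth_curve_on J l -> smooth_on I g ->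
      (forall v, J v -> vc1 (l v) = 0 /\ ip (l v) (l v) = 1 /\
                        ip (dvec l v) (dvec l v) = 1) ->
      marginally_trapped (meridian2 l g) (fun u v => I u /\ J v) ->
      ~ parallel_H (meridian2 l g) (fun u v => I u /\ J v)).
Proof.
  split.
  - intros I J l g HI Hp HJ Hl Hg Hc _ HMT.
    apply (gen_inst I J l g e4 (-1)); auto.
    + intros v Hv. destruct (Hc v Hv) as [h1 [h2 h3]]. repeat split; auto.
      unfold ip; simpl; rewrite h1; ring.
    + unfold ip; simpl; ring.
    + ring.
  - intros I J l g HI Hp HJ Hl Hg Hc HMT.
    apply (gen_inst I J l g e1 1); auto.
    + intros v Hv. destruct (Hc v Hv) as [h1 [h2 h3]]. repeat split; auto.
      unfold ip; simpl; rewrite h1; ring.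
    + unfold ip; simpl; ring.
    + ring.
Qed.
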